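(* In the setting below, if $g(x)$ is self-reciprocal and $\gcd(t_{22}(x),g_{12}(x))=1$, then $$\gcd\big(g_{11}'(x),\ g_{11}(x)\bar g_{11}(x)+g_{12}(x)\bar g_{12}(x)\big)=1.$$
   Context: Let $q$ be a prime power, $F=\mathbb{F}_q$, $m\ge1$ with $\gcd(q,m)=1$. For a nonzero polynomial $f$ of degree $k$, $f^*(x)=x^kf(x^{-1})$; $f$ is self-reciprocal if $f^*=\alpha f$ for some $\alpha\in F$. For a polynomial $f$ of degree at most $m$, $\bar f(x)=x^m f(x^{-1})$. Let $g_{11},g_{12}\in F[x]$ with $g_{11}\mid x^m-1$ and $\deg g_{12}<m$. Let $g=\gcd(g_{11},g_{12})$, $g_{11}=g\,g_{11}'$, $g_{22}=(x^m-1)/g_{11}'$, $g_{22}=g\,g_{22}'$, $r_{22}=\gcd(g_{22}',g_{22}'^* )$, $t_{22}=g_{22}'/r_{22}$. *)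

(* Defs.v *)
From mathcomp Require Import all_boot all_algebra all_field.
Set Implicit Arguments. Unset Strict Implicit. Unset Printing Implicit Defensive.
Import GRing.Theory.
Local Open Scope ring_scope.

(* Reciprocal f^*(x) = x^(deg f) f(1/x): coefficient list reversed. *)
Definition recip (F : fieldType) (f : {poly F}) : {poly F} :=
  \poly_(i < size f) f`_((size f).-1 - i).

Definition self_reciprocal (F : fieldType) (f : {poly F}) : Prop :=
  f != 0 /\ exists alpha : F, recip f = alpha *: f.

(* bar f (x) = x^m f(1/x), for deg f <= m. *)
Definition barm (F : fieldType) (m : nat) (f : {poly F}) : {poly F} :=
  \poly_(i < m.+1) f`_(m - i).

(* Main.v *)
Require Import Defs.
From mathcomp Require Import all_boot all_algebra all_field.
From mathcomp Require Import zify.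
Import GRing.Theory.
Local Open Scope ring_scope.

Section Aux.
Variable F : fieldType.
Implicit Types f p d a b c : {poly F}.

Lemma coef_barm m f i : (barm m f)`_i = if (i <= m)%N then f`_(m - i) else 0.
Proof. by rewrite /barm coef_poly ltnS. Qed.

Lemma barmD m p q : barm m (p + q) = barm m p + barm m q.
Proof.
apply/polyP=> i; rewrite !(coefD, coef_barm); case: ifP => //; by rewrite addr0.
Qed.

Lemma barmZ m (c : F) p : barm m (c *: p) = c *: barm m p.
Proof.
apply/polyP=> i; rewrite !(coefZ, coef_barm); case: ifP => //; by rewrite mulr0.
Qed.

Lemma barmB m p q : barm m (p - q) = barm m p - barm m q.
Proof.
apply/polyP=> i; rewrite !(coefB, coef_barm); case: ifP => //; by rewrite subr0.
Qed.

Lemma barm0 m : barm m (0 : {poly F}) = 0.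
Proof. by apply/polyP=> i; rewrite coef_barm coef0; case: ifP => _ //; rewrite coef0. Qed.

Lemma barm_sum m n (G : 'I_n -> {poly F}) :
  barm m (\sum_(i < n) G i) = \sum_(i < n) barm m (G i).
Proof. exact: (big_morph _ (barmD m) (barm0 m)). Qed.

Lemma barmXn m i : (i <= m)%N -> barm m ('X^i : {poly F}) = 'X^(m - i).
Proof.
move=> him; apply/polyP=> j; rewrite coef_barm !coefXn.
case: (leqP j m) => hj.
  by have -> : ((m - j)%N == i) = (j == (m - i)%N) by apply/eqP/eqP; lia.
by have -> : (j == (m - i)%N) = false by apply/eqP; lia.
Qed.

Lemma poly_expand n f : (size f <= n)%N -> f = \sum_(i < n) f`_i *: 'X^i.
Proof.
move=> hs; rewrite -poly_def; apply/polyP=> i; rewrite coef_poly.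
by case: ltnP => // h; rewrite nth_default //; apply: leq_trans h.
Qed.

Arguments poly_expand {n f}.

Lemma barm_expand k f : (size f <= k.+1)%N ->
  barm k f = \sum_(i < k.+1) f`_i *: 'X^(k - i).
Proof.
move=> hs; rewrite {1}(poly_expand hs) barm_sum; apply: eq_bigr => i _.
by rewrite barmZ barmXn // -ltnS.
Qed.

Arguments barm_expand {k f}.

Lemma barmM k l a b : (size a <= k.+1)%N -> (size b <= l.+1)%N ->
  barm (k + l) (a * b) = barm k a * barm l b.
Proof.
move=> ha hb.
have -> : a * b = \sum_(i < k.+1) \sum_(j < l.+1) (a`_i * b`_j) *: 'X^(i + j).
  rewrite {1}(poly_expand ha) {1}(poly_expand hb) big_distrl.
  apply: eq_bigr => i _; rewrite big_distrr; apply: eq_bigr => j _.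
  by rewrite /= -scalerAl -scalerAr scalerA exprD.
rewrite (barm_expand ha) (barm_expand hb) barm_sum big_distrl.
apply: eq_bigr => i _; rewrite barm_sum big_distrr; apply: eq_bigr => j _.
have hi := ltn_ord i; have hj := ltn_ord j.
rewrite barmZ barmXn; last by lia.
rewrite /= -scalerAl -scalerAr scalerA -exprD; congr (_ *: 'X^_); lia.
Qed.

Lemma barmK m f : (size f <= m.+1)%N -> barm m (barm m f) = f.
Proof.
move=> hs; apply/polyP=> i; rewrite !coef_barm.
case: (leqP i m) => hi.
  by rewrite leq_subr subKn.
by rewrite nth_default //; apply: leq_trans hs _.
Qed.

Arguments barmK {m f}.

Lemma size_barm m f : (size (barm m f) <= m.+1)%N.
Proof. exact: size_poly. Qed.

Lemma recipE f : recip f = barm (size f).-1 f.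
Proof.
rewrite /recip /barm; case E: (size f) => [|n] //=.
apply/polyP=> i; rewrite !coef_poly; case: ifP => // _.
by rewrite nth_default // E.
Qed.

Definition rv f := barm (size f).-1 f.

Lemma rv_coef0 f : (rv f)`_0 = lead_coef f.
Proof. by rewrite /rv coef_barm leq0n subn0. Qed.

Lemma size_barm_full m f : f`_0 != 0 -> size (barm m f) = m.+1.
Proof. by move=> h; rewrite /barm size_poly_eq //= subnn. Qed.

Lemma size_rv f : f`_0 != 0 -> size (rv f) = size f.
Proof.
move=> h; rewrite /rv size_barm_full // prednK // lt0n size_poly_eq0.
by apply: contraNneq h => ->; rewrite coef0.
Qed.

Lemma coef0_dvd d p : d %| p -> p`_0 != 0 -> d`_0 != 0.
Proof.
case/dvdpP=> c ->; rewrite coef0M; apply: contraNneq => ->; by rewrite mulr0.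
Qed.

Arguments coef0_dvd {d p}.

Lemma dvd_barm k d p : d %| p -> p != 0 -> (size p <= k.+1)%N -> rv d %| barm k p.
Proof.
case/dvdpP=> c Ep pnz hs.
have cnz : c != 0 by apply: contraNneq pnz => c0; rewrite Ep c0 mul0r.
have dnz : d != 0 by apply: contraNneq pnz => d0; rewrite Ep d0 mulr0.
have sp := size_mul cnz dnz; rewrite -Ep in sp.
have sc : (0 < size c)%N by rewrite lt0n size_poly_eq0.
have sd : (0 < size d)%N by rewrite lt0n size_poly_eq0.
move: sp; rewrite -(prednK sc) addSn /= => sp.
have e1 : (size d <= k.+1)%N by apply: leq_trans hs; rewrite sp leq_addl.
have e2 : ((size d).-1 <= k)%N by rewrite -ltnS prednK.
have e3 : (size c <= (k - (size d).-1).+1)%N.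
  move: hs; rewrite sp -(prednK sd) -{2}(prednK sc).
  move: (size c).-1 (size d).-1 => x y; rewrite /=; lia.
rewrite (_ : k = ((k - (size d).-1) + (size d).-1)%N); last by rewrite subnK.
rewrite Ep barmM //; first exact: dvdp_mull.
by rewrite prednK.
Qed.

Arguments dvd_barm {k d p}.

Lemma dvd_barm_inv k d p : d %| barm k p -> p != 0 -> (size p <= k.+1)%N -> rv d %| p.
Proof.
move=> h pnz hs; rewrite -(barmK hs); apply: dvd_barm h _ (size_barm _ _).
by apply: contraNneq pnz => h0; rewrite -(barmK hs) h0 barm0.
Qed.

Arguments dvd_barm_inv {k d p}.

Lemma coprime_rv a b : a`_0 != 0 -> b`_0 != 0 -> coprimep a b ->
  coprimep (rv a) (rv b).
Proof.
move=> a0 b0 cab; have anz : a != 0 by apply: contraNneq a0 => ->; rewrite coef0.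
have bnz : b != 0 by apply: contraNneq b0 => ->; rewrite coef0.
apply/coprimepP => d d1 d2.
have d0 : d`_0 != 0 by apply: (coef0_dvd d1); rewrite rv_coef0 lead_coef_eq0.
have h1 : rv d %| a by apply: (dvd_barm_inv d1 anz); rewrite prednK // lt0n size_poly_eq0.
have h2 : rv d %| b by apply: (dvd_barm_inv d2 bnz); rewrite prednK // lt0n size_poly_eq0.
by rewrite -size_poly_eq1 -size_rv // size_poly_eq1; apply: (coprimepP _ _ cab).
Qed.

End Aux.
Arguments rv {F}.
Arguments coef0_dvd {F d p}.
Arguments dvd_barm {F k d p}.
Arguments dvd_barm_inv {F k d p}.
Arguments coprime_rv {F a b}.

Lemma natr_neq0_fin (F : finFieldType) m : coprime #|F| m -> (m%:R : F) != 0.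
Proof.
move=> cop; have [p pr pch] := finPcharP F.
apply/negP => /eqP hm.
have pm : (p %| m)%N by rewrite (dvdn_pcharf pch) hm.
have cardF : #|F| = (p ^ logn p #|F|)%N := card_pprimeChar pch.
have n0 : (0 < logn p #|F|)%N.
  case E: (logn p #|F|) => //; have := card_finNzRing_gt1 F.
  by rewrite cardF E.
by move: cop; rewrite cardF coprime_pexpl // prime_coprime // pm.
Qed.

Lemma sepN (F : finFieldType) m : (0 < m)%N -> coprime #|F| m ->
  separable_poly ('X^m - 1 : {poly F}).
Proof.
move=> m0 cop; rewrite unlock derivB derivXn derivC subr0.
rewrite -scaler_nat coprimepZr ?natr_neq0_fin //.
apply: coprimep_expr.
have -> : ('X : {poly F}) = 'X - 0%:P by rewrite subr0.
rewrite coprimep_XsubC rootE !hornerE oppr0 expr0n eqn0Ngt m0 /= sub0r oppr_eq0.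
exact: oner_neq0.
Qed.

Theorem lemma4p2 (F : finFieldType) (m : nat) (g11 g12 : {poly F}) :
  (0 < m)%N -> coprime #|F| m ->
  g11 %| 'X^m - 1 -> (size g12 <= m)%N ->
  let g := gcdp g11 g12 in
  let g11' := g11 %/ g in
  let g22 := ('X^m - 1) %/ g11' in
  let g22' := g22 %/ g in
  let r22 := gcdp g22' (recip g22') in
  let t22 := g22' %/ r22 in
  self_reciprocal g ->
  coprimep t22 g12 ->
  coprimep g11' (g11 * barm m g11 + g12 * barm m g12).
Proof.
move=> m0 cop dvN sz12 g g11' g22 g22' r22 t22 [gnz [alpha ral]] ct.
pose N : {poly F} := 'X^m - 1; rewrite -/N in dvN.
have sN : size N = m.+1 by rewrite size_Xn_sub_1.
have Nnz : N != 0 by rewrite -size_poly_eq0 sN.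
have N0 : N`_0 != 0.
  rewrite /N coefB coefXn coefC /=; have -> : (0 == m)%N = false by case: (m) m0.
  by rewrite sub0r oppr_eq0 oner_neq0.
have bN : barm m N = - N.
  rewrite /N barmB barmXn // subnn -(expr0 'X) barmXn // subn0 expr0 opprB //.
have Eg11 : g11 = g11' * g by rewrite /g11' divpK // dvdp_gcdl.
have [h Eh] := dvdpP _ _ dvN.
have EN : N = g11' * g * h by rewrite Eh mulrC -Eg11.
have g11'nz : g11' != 0 by apply: contraNneq Nnz => e; rewrite EN e !mul0r.
have ggnz : g11' * g != 0 by apply: contraNneq Nnz => e; rewrite EN e mul0r.
have hnz : h != 0 by apply: contraNneq Nnz => e; rewrite EN e mulr0.
have Eg22' : g22' = h by rewrite /g22' /g22 -/N EN -mulrA !mulKp.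
rewrite /t22 /r22 Eg22' in ct *.
have sep := @sepN _ _ m0 cop; rewrite -/N EN !separable_mul in sep.
case/and3P: sep => /and3P[_ _ c1g] _ c1h.
rewrite coprimepMl in c1h; case/andP: c1h => c1h _.
have d11 : g11' %| N by rewrite EN -mulrA dvdp_mulr.
have g11'0 : g11'`_0 != 0 := coef0_dvd d11 N0.
have g0 : g`_0 != 0 by apply: (coef0_dvd _ N0); rewrite EN mulrAC dvdp_mull // dvdp_mulr.
have h0 : h`_0 != 0 by apply: (coef0_dvd _ N0); rewrite EN dvdp_mull.
have cA : coprimep g11' g12.
  apply/coprimepP => d d1 d2; apply: (coprimepP _ _ c1g) => //.
  by rewrite dvdp_gcd d2 andbT (dvdp_trans d1) // Eg11 dvdp_mulr.
have cB : coprimep g11' (barm m g12).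
  have [e12|g12nz] := eqVneq g12 0.
    by rewrite e12 barm0; rewrite e12 in cA.
  apply/coprimepP => d d1 d2.
  have d0 : d`_0 != 0 := coef0_dvd d1 g11'0.
  have Dg12 : rv d %| g12 by apply: (dvd_barm_inv d2 g12nz); apply: leqW.
  have DR : rv d %| rv g11'.
    by apply: (dvd_barm d1 g11'nz); rewrite prednK // lt0n size_poly_eq0.
  have cD : coprimep (rv d) g11'.
    by rewrite coprimep_sym; apply: coprimep_dvdl Dg12 cA.
  have RN : rv g11' %| N by rewrite -dvdpNr -bN; apply: dvd_barm; rewrite ?sN.
  have cRg : coprimep (rv g11') g.
    have := coprime_rv g11'0 g0 c1g; rewrite [rv g]/rv -recipE ral coprimepZr //.
    apply: contraNneq gnz => a0; move: ral; rewrite a0 scale0r recipE => r0.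
    by rewrite -lead_coef_eq0 -rv_coef0 /rv r0 coef0.
  have Rgh : rv g11' %| g11' * h.
    by rewrite -(Gauss_dvdpr _ cRg) mulrCA mulrA -EN.
  have Dh : rv d %| h by rewrite -(Gauss_dvdpr _ cD) (dvdp_trans DR).
  have Dr : coprimep (rv d) (gcdp h (recip h)).
    apply/coprimepP => e e1 e2.
    have eR : e %| rv g11' := dvdp_trans e1 DR.
    have e0 : e`_0 != 0.
      by apply: (coef0_dvd eR); rewrite rv_coef0 lead_coef_eq0.
    have eh : e %| barm (size h).-1 h by rewrite -recipE (dvdp_trans e2) // dvdp_gcdr.
    have r1 : rv e %| g11'.
      by apply: (dvd_barm_inv eR g11'nz); rewrite prednK // lt0n size_poly_eq0.
    have r2 : rv e %| h.
      by apply: (dvd_barm_inv eh hnz); rewrite prednK // lt0n size_poly_eq0.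
    by rewrite -size_poly_eq1 -size_rv // size_poly_eq1; apply: (coprimepP _ _ c1h).
  have Dt : rv d %| h %/ gcdp h (recip h).
    by rewrite -(Gauss_dvdpl _ Dr) divpK // dvdp_gcdl.
  by rewrite -size_poly_eq1 -size_rv // size_poly_eq1; apply: (coprimepP _ _ ct).
by rewrite {1}Eg11 -mulrA [g11' * _]mulrC coprimep_addl_mul coprimepMr cA cB.
Qed.
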